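(* Let $X$ be the set of continuous functions $f:[1,\infty)\to\mathbb{R}$ such that $f(x)\ge x$ for all $1\le x<2$, and $(y+1)f(y)+f(x)\ge (y+1)x$ for all $x\ge 2$ and all $1\le y\le x$. For a real number $c$, let $f_c(x)=x^c$ on $[1,\infty)$. Then $f_c\in X$ if and only if $c\ge \frac{1+\sqrt5}{2}$. In particular, $X$ is nonempty. *)

(* Defs.v *)
From Stdlib Require Import Reals Lra.
Open Scope R_scope.

(* The domain [1, +oo). Functions are modelled as f : R -> R; only their values
   on [1, +oo) matter. *)
Definition dom1 (x : R) : Prop := 1 <= x.

Definition cont_on_dom1 (f : R -> R) : Prop :=
  forall x, dom1 x -> limit1_in f dom1 (f x) x.

Definition inX (f : R -> R) : Prop :=
  cont_on_dom1 f /\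
  (forall x, 1 <= x < 2 -> f x >= x) /\
  (forall x y, x >= 2 -> 1 <= y <= x -> (y + 1) * f y + f x >= (y + 1) * x).

Definition fpow (c : R) (x : R) : R := Rpower x c.

Definition golden : R := (1 + sqrt 5) / 2.

(* Main.v *)
Require Import Defs.
From Stdlib Require Import Reals Lra Psatz.
Open Scope R_scope.

Lemma expm (a b : R) : a <= b -> exp a <= exp b.
Proof. intros [H|H]; [left; apply exp_increasing; exact H| subst; lra]. Qed.

Lemma ln_ge0 (x : R) : 1 <= x -> 0 <= ln x.
Proof. intros [H|H]; [left; rewrite <- ln_1; apply ln_increasing; lra| subst; rewrite ln_1; lra]. Qed.

Lemma young (l p q : R) : 0 <= l <= 1 ->
  exp (l * p + (1 - l) * q) <= l * exp p + (1 - l) * exp q.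
Proof.
  intros Hl. set (M := l * p + (1 - l) * q).
  assert (E1 : exp p = exp M * exp (p - M)) by (rewrite <- exp_plus; f_equal; ring).
  assert (E2 : exp q = exp M * exp (q - M)) by (rewrite <- exp_plus; f_equal; ring).
  pose proof (exp_ineq1_le (p - M)). pose proof (exp_ineq1_le (q - M)).
  pose proof (exp_pos M).
  rewrite E1, E2.
  assert (l * (exp M * exp (p - M)) >= l * (exp M * (1 + (p - M)))) by
    (apply Rle_ge, Rmult_le_compat_l; [lra| apply Rmult_le_compat_l; lra]).
  assert ((1 - l) * (exp M * exp (q - M)) >= (1 - l) * (exp M * (1 + (q - M)))) by
    (apply Rle_ge, Rmult_le_compat_l; [lra| apply Rmult_le_compat_l; lra]).
  assert (l * (exp M * (1 + (p - M))) + (1 - l) * (exp M * (1 + (q - M))) = exp M)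
    by (unfold M; ring).
  lra.
Qed.

Lemma golden_facts : golden * golden = golden + 1 /\ 1.618 < golden < 1.61805.
Proof.
  unfold golden. pose proof (sqrt_sqrt 5 ltac:(lra)). pose proof (sqrt_pos 5).
  split; [nra|]. split; nra.
Qed.

Lemma cont_fpow (c : R) : cont_on_dom1 (fpow c).
Proof.
  intros x Hx. unfold dom1 in Hx.
  assert (D : derivable_pt (fpow c) x).
  { exists (c * Rpower x (c - 1)). apply derivable_pt_lim_power. lra. }
  pose proof (derivable_continuous_pt _ _ D) as C.
  intros eps He. destruct (C eps He) as [alp [Ha H]].
  exists alp. split; auto. intros y [_ Hy].
  destruct (Req_dec x y) as [<-|Hn].
  - simpl. unfold R_dist. rewrite Rminus_diag, Rabs_R0. lra.
  - apply H. split; [split; [exact I|auto]|exact Hy].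
Qed.

Lemma suff (c : R) : c >= golden -> inX (fpow c).
Proof.
  intros Hc. destruct golden_facts as [G1 G2]. set (g := golden) in *.
  split; [apply cont_fpow|split].
  - intros x Hx. unfold fpow, Rpower.
    pose proof (ln_ge0 x ltac:(lra)).
    rewrite <- (exp_ln x) at 2 by lra. apply Rle_ge, expm. nra.
  - intros x y Hx Hy. unfold fpow, Rpower.
    pose proof (ln_ge0 y ltac:(lra)) as Ha. pose proof (ln_ge0 x ltac:(lra)) as Hb.
    set (a := ln y) in *. set (b := ln x) in *.
    rewrite <- (exp_ln x) by lra. rewrite <- (exp_ln y) by lra. fold a b.
    assert (P1 : exp (g * a) <= exp (c * a)) by (apply expm; nra).
    assert (Q1 : exp (g * b) <= exp (c * b)) by (apply expm; nra).
    set (Y := exp a). set (X := exp b). set (P := exp (g * a)). set (Q := exp (g * b)).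
    set (s := exp (b / 2)).
    assert (HY : 1 <= Y) by (unfold Y; rewrite <- exp_0; apply expm; lra).
    assert (HP : 1 <= P) by (unfold P; rewrite <- exp_0; apply expm; nra).
    assert (Hs : 0 < s) by apply exp_pos.
    assert (HX : X = s * s) by (unfold X, s; rewrite <- exp_plus; f_equal; lra).
    assert (HQ : s * s * s <= Q).
    { unfold s, Q. rewrite <- !exp_plus. apply expm. nra. }
    assert (Yg : Y * X <= / (g * g) * (Y * P) + / g * Q).
    { assert (e3 : 1 - / (g * g) = / g).
      { replace (1 - / (g * g)) with ((g * g - 1) / (g * g)) by (field; lra).
        replace (g * g - 1) with g by lra. field; lra. }
      assert (e : Y * X = exp (/ (g * g) * ((g * g) * a) + (1 - / (g * g)) * (g * b))).
      { unfold Y, X. rewrite <- exp_plus. f_equal. rewrite e3. field. lra. }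
      rewrite e. eapply Rle_trans; [apply young|].
      { split; [left; apply Rinv_0_lt_compat; nra|].
        rewrite <- Rinv_1. apply Rinv_le_contravar; nra. }
      assert (e2 : exp (g * g * a) = Y * P) by (unfold Y, P; rewrite <- exp_plus; f_equal; rewrite G1; ring).
      rewrite e2, e3. fold Q. lra. }
    assert (Hcp : (Y + 1) * P + Q >= (Y + 1) * X).
    { assert (YP : 1 <= Y * P) by nra.
      assert (Ig : / g * g = 1) by (field; lra).
      assert (Ig2 : / (g * g) * (g * g) = 1) by (field; lra).
      assert (Pi : 0 < / g) by (apply Rinv_0_lt_compat; lra).
      assert (Pi2 : 0 < / (g * g)) by (apply Rinv_0_lt_compat; nra).
      set (u := / g) in *. set (v := / (g * g)) in *.
      assert (Hv : v = u * u) by (unfold u, v; field; lra).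
      assert (Hu : u = g - 1) by (unfold u; apply Rmult_eq_reg_l with g; [rewrite Rinv_r by lra; nra|lra]).
      assert (key : s * s <= g + u * u * (s * s * s)).
      { rewrite Hu.
        assert (uu : 0.38 <= (g - 1) * (g - 1)) by nra.
        assert (s3 : 0 <= s * s * s) by (apply Rmult_le_pos; nra).
        pose proof (Rmult_le_pos _ _ (pow2_ge_0 (s-1.75)) (Rlt_le _ _ Hs)).
        assert (0.38 * (s * s * s) <= (g - 1) * (g - 1) * (s * s * s)) by (apply Rmult_le_compat_r; lra).
        nra. }
      assert (u * (Y * P) >= u * 1) by (apply Rle_ge, Rmult_le_compat_l; lra).
      assert (u * u * Q >= u * u * (s * s * s)) by (apply Rle_ge, Rmult_le_compat_l; nra).
      assert (1 - v = u) by (rewrite Hv, Hu; nra).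
      assert (1 - u = u * u) by (rewrite Hu; nra).
      assert (Y * P + P + Q - Y * X - X >= (1 - v) * (Y * P) + P + (1 - u) * Q - X) by lra.
      rewrite HX in *. rewrite H1, H2 in H3. nra. }
    change (exp (g * a)) with P in P1. change (exp (g * b)) with Q in Q1.
    assert ((Y + 1) * P <= (Y + 1) * exp (c * a)) by (apply Rmult_le_compat_l; lra). lra.
Qed.

Lemma nec (c : R) : inX (fpow c) -> c >= golden.
Proof.
  intros [_ [H2 H3]]. destruct golden_facts as [G1 G2]. set (g := golden) in *.
  destruct (Rlt_le_dec c g) as [Hlt|Hge]; [|lra]. exfalso.
  destruct (Rlt_le_dec c 1) as [Hc1|Hc1].
  - specialize (H2 (3/2) ltac:(lra)). unfold fpow, Rpower in H2.
    assert (l : 0 < ln (3/2)) by (rewrite <- ln_1; apply ln_increasing; lra).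
    assert (exp (c * ln (3/2)) < exp (ln (3/2))) by (apply exp_increasing; nra).
    rewrite exp_ln in H by lra. lra.
  - assert (Hq : c * c - c - 1 < 0).
    { assert ((c - g) * (c + g - 1) < 0) by (apply Rmult_neg_pos; lra). nra. }
    assert (Hcp : 0 < c) by lra.
    set (e := (1 + c - c * c) / (2 * c)).
    assert (He : 0 < e) by (unfold e; apply Rdiv_lt_0_compat; lra).
    set (t := (c - 1 + / c) / 2).
    assert (ic : 0 < / c <= 1).
    { split; [apply Rinv_0_lt_compat; lra|]. rewrite <- Rinv_1. apply Rinv_le_contravar; lra. }
    assert (Ht : 0 <= t <= 1) by (unfold t; lra).
    assert (Ht1 : t * c - 1 <= - e).
    { unfold t, e. assert (t * c - 1 = (c * c - c - 1) / 2) by (unfold t; field; lra).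
      replace ((c - 1 + / c) / 2 * c - 1) with ((c * c - c - 1) / 2) by (field; lra).
      replace (- ((1 + c - c * c) / (2 * c))) with ((c * c - c - 1) / 2 * / c) by (field; lra).
      assert ((c * c - c - 1) / 2 * 1 <= (c * c - c - 1) / 2 * / c) by (apply Rmult_le_compat_neg_l; lra).
      lra. }
    assert (Ht2 : c - t - 1 = - e) by (unfold t, e; field; lra).
    set (L := 3 / e + 1).
    assert (HeL : e * L = 3 + e) by (unfold L; field; lra).
    assert (HL : 1 <= L) by (unfold L; assert (0 < 3 / e) by (apply Rdiv_lt_0_compat; lra); lra).
    set (x := exp L). set (y := exp (t * L)).
    assert (Hx : x >= 2) by (unfold x; pose proof (exp_ineq1_le L); lra).
    assert (Hy1 : 1 <= y) by (unfold y; rewrite <- exp_0; apply expm; nra).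
    assert (Hyx : y <= x) by (unfold y, x; apply expm; nra).
    specialize (H3 x y Hx ltac:(lra)). unfold fpow, Rpower in H3.
    replace (ln y) with (t * L) in H3 by (unfold y; symmetry; apply ln_exp).
    replace (ln x) with L in H3 by (unfold x; symmetry; apply ln_exp).
    assert (Em : exp (- e * L) <= / 4).
    { replace (- e * L) with (- (e * L)) by ring. rewrite exp_Ropp.
      pose proof (exp_ineq1_le (e * L)). apply Rinv_le_contravar; lra. }
    set (E1 := exp ((t * c - 1) * L)). set (E2 := exp ((c - t - 1) * L)).
    assert (HE1 : E1 <= / 4) by (eapply Rle_trans; [|exact Em]; apply expm; nra).
    assert (HE2 : E2 <= / 4) by (unfold E2; rewrite Ht2; exact Em).
    assert (P1 : 0 < E1) by apply exp_pos. assert (P2 : 0 < E2) by apply exp_pos.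
    set (Z := exp ((t + 1) * L)).
    assert (HZ : Z = y * x) by (unfold Z, y, x; rewrite <- exp_plus; f_equal; ring).
    assert (PZ : 0 < Z) by apply exp_pos.
    assert (A1 : y * exp (c * (t * L)) = Z * E1) by (unfold y, Z, E1; rewrite <- !exp_plus; f_equal; ring).
    assert (A2 : exp (c * L) = Z * E2) by (unfold Z, E2; rewrite <- !exp_plus; f_equal; ring).
    pose proof (exp_pos (c * (t * L))).
    assert (exp (c * (t * L)) <= y * exp (c * (t * L))) by nra.
    assert (Z * E1 <= Z * / 4) by (apply Rmult_le_compat_l; lra).
    assert (Z * E2 <= Z * / 4) by (apply Rmult_le_compat_l; lra).
    assert (0 < x) by (unfold x; apply exp_pos).
    nra.
Qed.

Theorem mainTheorem1 :
  (forall c : R, inX (fpow c) <-> c >= golden) /\ (exists f : R -> R, inX f).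
Proof.
  split.
  - intros c; split; [apply nec|apply suff].
  - exists (fpow golden). apply suff. lra.
Qed.
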